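(* Let $\lambda$ be a finite measure on $\mathcal M$ and $\mathcal R$ a symmetric recombination measure such that $(\mathcal R,\lambda)$ is shattering with constant $\alpha$. Then for all $k\ge1$, $$\int|\mathcal A|^{(\lambda)}_2\,d\mathcal R_k(\mathcal A)\le\frac{\alpha^*}{k+1},\qquad \alpha^*:=\lambda(\mathcal M)^2\vee 2\alpha\lambda(\mathcal M).$$
   Context: $\mathcal M$ is a complete separable metric space. $\mathcal R$ is the law of a random Borel set $R\subseteq\mathcal M$, symmetric in that $R$ and $R^c$ have the same law. $(\mathcal R,\lambda)$ is shattering with constant $\alpha>0$ if $\lambda(A)^3\le 2\alpha\int\lambda(A\cap R)\lambda(A\cap R^c)\,d\mathcal R(R)$ for all Borel $A$ (equivalently $\lambda(A)^3\le\alpha[\lambda(A)^2-2\int\lambda(A\cap R)^2\,d\mathcal R(R)]$). $\mathcal R_k$ is the law of the partition $\{R_1,R_1^c\}\wedge\cdots\wedge\{R_k,R_k^c\}$ (nonempty sets $\tilde R_1\cap\cdots\cap\tilde R_k$, $\tilde R_j\in\{R_j,R_j^c\}$) where $R_1,\dots,R_k$ are i.i.d. with law $\mathcal R$. For a finite partition $\mathcal A=\{A_1,\dots,A_N\}$, $|\mathcal A|^{(\lambda)}_r:=\sum_i\lambda(A_i)^r$. *)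

(* Defs.v *)
From HB Require Import structures.
From mathcomp Require Import all_boot all_order all_algebra.
From mathcomp Require Import all_classical all_reals all_analysis.
Set Implicit Arguments. Unset Strict Implicit. Unset Printing Implicit Defensive.
Import Order.TTheory GRing.Theory Num.Theory.
Local Open Scope classical_set_scope.
Local Open Scope ring_scope.

Definition separable_space (T : topologicalType) : Prop :=
  exists D : set T, countable D /\ closure D = setT.

Definition borel_of (T : topologicalType) := g_sigma_algebraType (@open T).

(* The partition {S_1,S_1^c} /\ ... /\ {S_k,S_k^c}: the nonempty sets
   S~_1 `&` ... `&` S~_k with S~_j in {S_j, ~` S_j}. *)
Definition cells (T : Type) (Ss : seq (set T)) : set (set T) :=
  [set C | C !=set0 /\ exists e : nat -> bool,
     C = \bigcap_(i in `I_(size Ss))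
           (if e i then nth set0 Ss i else ~` nth set0 Ss i)].

Definition norm2 {d} {T : measurableType d} {R : realType}
  (lam : set T -> \bar R) (P : set (set T)) : R :=
  \sum_(C \in P) (fine (lam C)) ^+ 2.

(* Iterated integral: with R_1,...,R_k i.i.d. copies of the random set RS
   (law P), Eiter k acc = E[ f (R_1 :: ... :: R_k :: acc) ].  In particular
   Eiter k [::] = \int |A|_2 dR_k(A). *)
Fixpoint Eiter {d dO} {T : measurableType d} {O : measurableType dO}
  {R : realType} (P : probability O R) (RS : O -> set T)
  (lam : set T -> \bar R) (k : nat) (acc : seq (set T)) : \bar R :=
  match k with
  | 0 => (norm2 lam (cells acc))%:E
  | k'.+1 => (\int[P]_w Eiter P RS lam k' (RS w :: acc))%E
  end.

(* Main.v *)
Require Import Defs.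
From HB Require Import structures.
From mathcomp Require Import all_boot all_order all_algebra.
From mathcomp Require Import all_classical all_reals all_analysis.
Import Order.TTheory GRing.Theory Num.Theory.
Local Open Scope classical_set_scope.
Local Open Scope ring_scope.

From mathcomp Require Import measurable_realfun.
From mathcomp Require Import ring lra.


Section comb.
Context {T : Type}.

Fixpoint cellsL (acc : seq (set T)) : seq (set T) :=
  match acc with
  | [::] => [:: setT]
  | R :: a => [seq C `&` R | C <- cellsL a] ++ [seq C `&` ~` R | C <- cellsL a]
  end.

Definition bcap (acc : seq (set T)) (e : nat -> bool) :=
  \bigcap_(i in `I_(size acc)) (if e i then nth set0 acc i else ~` nth set0 acc i).

Lemma bcap_cons R a e :
  bcap (R :: a) e = bcap a (fun i => e i.+1) `&` (if e 0%N then R else ~` R).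
Proof.
apply/seteqP; split => x.
  move=> H; split.
    move=> i /= Hi; exact: (H i.+1).
  exact: (H 0%N).
move=> [H1 H2] [|i] /= Hi //.
exact: H1.
Qed.

Lemma bcap_in acc e : bcap acc e \in cellsL acc.
Proof.
elim: acc e => [|R a IH] e.
  by rewrite /bcap /= (_ : `I_0 = set0) ?bigcap_set0 ?mem_seq1 //;
     apply/seteqP; split => x //=.
rewrite bcap_cons /= mem_cat; case: (e 0%N).
  by rewrite (map_f (fun C => C `&` R)) // IH.
by rewrite (map_f (fun C => C `&` ~` R)) ?orbT // IH.
Qed.

Lemma cells_in acc C : cells acc C -> C \in cellsL acc.
Proof. by move=> [_ [e ->]]; exact: bcap_in. Qed.

End comb.

Lemma sum_undup_le (R : realDomainType) (T : eqType) (s : seq T) (f : T -> R) :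
  (forall x, 0 <= f x) -> \sum_(x <- undup s) f x <= \sum_(x <- s) f x.
Proof.
move=> f0; elim: s => [|x s IH] //=.
case: ifP => _; rewrite !big_cons.
  by rewrite -[X in X <= _]add0r; apply: lerD => //; exact: f0.
by rewrite lerD2l.
Qed.

Section norm2.
Context d (T : measurableType d) (R : realType).
Variable lam : set T -> \bar R.

Lemma norm2_le acc :
  norm2 lam (cells acc) <= \sum_(C <- cellsL acc) (fine (lam C)) ^+ 2.
Proof.
rewrite /norm2.
have -> : cells acc = cells acc `&` [set` undup (cellsL acc)].
  apply/seteqP; split => C; last by case.
  by move=> H; split => //=; rewrite mem_undup; exact: cells_in.
rewrite fsbig_mkcondl -fsbig_seq ?undup_uniq //.
apply: le_trans; last apply: sum_undup_le; last by move=> x; exact: sqr_ge0.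
apply: ler_sum => C _; case: ifP => _ //; exact: sqr_ge0.
Qed.

End norm2.


Section realalg.
Context {R : realFieldType}.
Definition psi (c k x : R) := c * x / (c + k * x).

Lemma psi_ge0 c k x : 0 < c -> 0 <= k -> 0 <= x -> 0 <= psi c k x.
Proof.
move=> c0 k0 x0; rewrite /psi divr_ge0 //; first by rewrite mulr_ge0 // ltW.
have := mulr_ge0 k0 x0; lra.
Qed.

Lemma psi_tangent c k x m : 0 < c -> 0 <= k -> 0 <= x -> 0 <= m ->
  psi c k x <= (psi c k m - c ^+ 2 / (c + k * m) ^+ 2 * m) + c ^+ 2 / (c + k * m) ^+ 2 * x.
Proof.
move=> c0 k0 x0 m0; rewrite /psi.
have D1 : 0 < c + k * m by have := mulr_ge0 k0 m0; lra.
have D2 : 0 < c + k * x by have := mulr_ge0 k0 x0; lra.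
rewrite -subr_ge0.
have -> : c * m / (c + k * m) - c ^+ 2 / (c + k * m) ^+ 2 * m +
    c ^+ 2 / (c + k * m) ^+ 2 * x - c * x / (c + k * x) =
    c ^+ 2 * k * (x - m) ^+ 2 / ((c + k * m) ^+ 2 * (c + k * x)).
  by field; rewrite !gt_eqF.
apply: divr_ge0.
  by apply: mulr_ge0; [apply: mulr_ge0|]; rewrite ?sqr_ge0.
by apply: mulr_ge0; rewrite ?sqr_ge0 // ltW.
Qed.

Lemma psi_mono c k y z : 0 < c -> 0 <= k -> 0 <= y -> y <= z -> psi c k y <= psi c k z.
Proof.
move=> c0 k0 y0 yz; rewrite /psi -subr_ge0.
have z0 : 0 <= z by lra.
have D1 : 0 < c + k * y by have := mulr_ge0 k0 y0; lra.
have D2 : 0 < c + k * z by have := mulr_ge0 k0 z0; lra.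
have -> : c * z / (c + k * z) - c * y / (c + k * y) =
    c ^+ 2 * (z - y) / ((c + k * y) * (c + k * z)).
  by field; rewrite !gt_eqF.
apply: divr_ge0; first by rewrite mulr_ge0 ?sqr_ge0 // subr_ge0.
by rewrite mulr_ge0 // ltW.
Qed.

Lemma psi_step c k x : 0 < c -> 0 <= k -> 0 <= x -> 0 <= x - x ^+ 2 / c ->
  psi c k (x - x ^+ 2 / c) <= psi c (k + 1) x.
Proof.
move=> c0 k0 x0 h0; rewrite /psi -subr_ge0.
have [h hE] : exists h, h = x - x ^+ 2 / c by eexists.
rewrite -hE in h0 *.
have D1 : 0 < c + k * h by have := mulr_ge0 k0 h0; lra.
have D2 : 0 < c + (k + 1) * x.
  by have := @mulr_ge0 _ (k + 1) x ltac:(lra) x0; lra.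
have -> : c * x / (c + (k + 1) * x) - c * h / (c + k * h) =
    x ^+ 3 / ((c + (k + 1) * x) * (c + k * h)).
  have E1 : c * c + k * (x * c - x ^+ 2) = c * (c + k * h).
    by rewrite hE; field; rewrite gt_eqF.
  rewrite hE; field; apply/and3P; split; apply: lt0r_neq0 => //.
  by rewrite E1 mulr_gt0.
apply: divr_ge0; first by rewrite exprn_ge0.
by rewrite mulr_ge0 // ltW.
Qed.

Lemma psi_final c k L : 0 < c -> 0 <= L -> 0 <= k ->
  psi c k (L ^+ 2) <= Num.max (L ^+ 2) (2 * c) / (k + 1).
Proof.
move=> c0 L0 k0; rewrite /psi.
set B := Num.max _ _.
have B1 : L ^+ 2 <= B by rewrite le_max lexx.
have B2 : c <= B by rewrite le_max; apply/orP; right; lra.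
have L2 : 0 <= L ^+ 2 by rewrite sqr_ge0.
have D1 : 0 < c + k * L ^+ 2 by have := mulr_ge0 k0 L2; lra.
rewrite ler_pdivrMr // mulrAC ler_pdivlMr ?ltr_wpDl //.
have B2' : 0 <= B - c by lra.
have B1' : 0 <= B - L ^+ 2 by lra.
have := mulr_ge0 (mulr_ge0 k0 L2) B2'.
have := mulr_ge0 (ltW c0) B1'.
nra.
Qed.

End realalg.


Section meas.
Context d (T : measurableType d) (R : realType).
Variable lam : {finite_measure set T -> \bar R}.
Context dO (O : measurableType dO) (P : probability O R) (RS : O -> set T).
Hypothesis RS_meas : measurable [set p : O * T | RS p.1 p.2].

Let L (C : set T) := fine (lam C).

Lemma cellsL_meas acc : (forall A : set T, A \in acc -> measurable A) ->
  forall C, C \in cellsL acc -> measurable C.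
Proof.
elim: acc => [|S a IH] Hm C /=.
  by rewrite mem_seq1 => /eqP ->.
have mS : measurable S by apply: Hm; rewrite mem_head.
have IH' : forall C, C \in cellsL a -> measurable C.
  by apply: IH => A HA; apply: Hm; rewrite inE HA orbT.
rewrite mem_cat => /orP[] /mapP[C' HC' ->].
  by apply: measurableI => //; exact: IH'.
by apply: measurableI; [exact: IH'|exact: measurableC].
Qed.

Lemma LE A : measurable A -> (L A)%:E = lam A.
Proof. by move=> mA; rewrite fineK// fin_num_measure. Qed.

Lemma LU C S : measurable C -> measurable S ->
  L (C `&` S) + L (C `&` ~` S) = L C.
Proof.
move=> mC mS; apply: EFin_inj; rewrite EFinD !LE //;
  try by apply: measurableI => //; exact: measurableC.
rewrite -measureU; try by apply: measurableI => //; exact: measurableC.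
  by rewrite -setIUr setUv setIT.
by rewrite setIACA setICr setI0.
Qed.

Lemma sumL acc : (forall A : set T, A \in acc -> measurable A) ->
  \sum_(C <- cellsL acc) L C = L setT.
Proof.
elim: acc => [|S a IH] Hm /=; first by rewrite big_seq1.
have mS : measurable S by apply: Hm; rewrite mem_head.
have Hm' : forall A : set T, A \in a -> measurable A.
  by move=> A HA; apply: Hm; rewrite inE HA orbT.
rewrite big_cat /= !big_map /= -big_split /= -(IH Hm') big_seq [in RHS]big_seq.
apply: eq_bigr => C HC; apply: LU => //.
by have := @cellsL_meas a Hm' C HC.
Qed.

Let E := [set p : O * T | RS p.1 p.2].

Lemma RSm w : measurable (RS w).
Proof.
have -> : RS w = xsection E w.
  by apply/seteqP; split => x; rewrite /xsection /= inE.
exact: measurable_xsection.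
Qed.

Lemma mfL C : measurable C -> measurable_fun setT (fun w => L (C `&` RS w)).
Proof.
move=> mC; apply/measurable_EFinP.
have -> : (EFin \o fun w => L (C `&` RS w)) = lam \o xsection (E `&` (setT `*` C)).
  apply/funext => w /=; rewrite LE; last by apply: measurableI => //; exact: RSm.
  congr (lam _); apply/seteqP; split => x; rewrite /xsection /= inE /=.
    by move=> [? ?]; split.
  by move=> [? [? ?]].
apply: (@measurable_fun_xsection _ _ O T R lam); apply: measurableI => //.
exact: measurableX.
Qed.

Lemma mfLc C : measurable C -> measurable_fun setT (fun w => L (C `&` ~` RS w)).
Proof.
move=> mC; apply/measurable_EFinP.
have -> : (EFin \o fun w => L (C `&` ~` RS w)) =
    lam \o xsection (~` E `&` (setT `*` C)).
  apply/funext => w /=; rewrite LE; last first.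
    by apply: measurableI => //; apply: measurableC; exact: RSm.
  congr (lam _); apply/seteqP; split => x; rewrite /xsection /= inE /=.
    by move=> [? ?]; split.
  by move=> [? [? ?]].
apply: (@measurable_fun_xsection _ _ O T R lam); apply: measurableI => //.
  exact: measurableC.
exact: measurableX.
Qed.


Variable alpha : R.
Hypothesis alpha_gt0 : 0 < alpha.
Hypothesis shatter : forall A : set T, measurable A ->
      (fine (lam A)) ^+ 3 <=
      2 * alpha * fine (\int[P]_w ((fine (lam (A `&` RS w)) *
                                    fine (lam (A `&` ~` RS w)))%:E)%E).

Lemma le_int_nm (f g : O -> \bar R) : (forall x, 0 <= f x)%E ->
  (forall x, f x <= g x)%E -> (\int[P]_x f x <= \int[P]_x g x)%E.
Proof.
move=> f0 fg; have g0 : forall x, (0 <= g x)%E by move=> x; exact: le_trans (f0 x) (fg x).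
rewrite !ge0_integralTE //; apply: ereal_sup_le => _ [h hf <-].
by exists h => // x; exact: le_trans (hf x) (fg x).
Qed.

Lemma Eiter_ge0 k acc : (0 <= Eiter P RS lam k acc)%E.
Proof.
elim: k acc => [|k IH] acc /=.
  by rewrite lee_fin /norm2; apply: fsumr_ge0 => C _; exact: sqr_ge0.
by apply: integral_ge0 => w _; exact: IH.
Qed.

Lemma intP_cst (r : \bar R) : (\int[P]_w r = r)%E.
Proof.
have H := integral_cst P (@measurableT _ O) r.
transitivity (r * P setT)%E; last by rewrite probability_setT mule1.
transitivity (\int[P]_(x in setT) cst r x)%E; first by apply: eq_integral.
exact: H.
Qed.

Lemma int_affine (X : O -> R) (a s mr : R) : measurable_fun setT X ->
  (forall w, 0 <= X w) -> 0 <= s -> (forall w, 0 <= a + s * X w) ->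
  (\int[P]_w (X w)%:E = mr%:E)%E -> (\int[P]_w (a + s * X w)%:E = (a + s * mr)%:E)%E.
Proof.
move=> mX X0 s0 aX IX.
have mX' : measurable_fun setT (fun w => (X w)%:E) by exact/measurable_EFinP.
have IsX : (\int[P]_w (s * X w)%:E = (s * mr)%:E)%E.
  under eq_integral do rewrite EFinM.
  by rewrite ge0_integralZl_EFin // ?IX // => w _; rewrite lee_fin.
have [a0|a0] := leP 0 a.
  under eq_integral do rewrite EFinD.
  have h1 : forall w : O, setT w -> (0 <= (a%:E : \bar R))%E by move=> *; rewrite lee_fin.
  have h2 : forall w, setT w -> (0 <= (s * X w)%:E)%E by move=> w _; rewrite lee_fin mulr_ge0.
  have h3 : measurable_fun setT (fun w => (s * X w)%:E).
    by apply/measurable_EFinP; apply: measurable_funM => //; exact: measurable_cst.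
  rewrite (ge0_integralD _ _ h1 _ h2 h3) //.
  by rewrite intP_cst IsX.
have H : (\int[P]_w ((a + s * X w)%:E + (- a)%:E) =
          \int[P]_w (a + s * X w)%:E + (- a)%:E)%E.
  have h1 : forall w, setT w -> (0 <= (a + s * X w)%:E)%E by move=> w _; rewrite lee_fin.
  have h2 : forall w : O, setT w -> (0 <= ((- a)%:E : \bar R))%E by move=> *; rewrite lee_fin; lra.
  have h3 : measurable_fun setT (fun w => (a + s * X w)%:E).
    apply/measurable_EFinP; apply: measurable_funD; first exact: measurable_cst.
    by apply: measurable_funM => //; exact: measurable_cst.
  rewrite (ge0_integralD _ _ h1 h3 h2) //.
  by rewrite intP_cst.
have : (\int[P]_w ((a + s * X w)%:E + (- a)%:E) = (s * mr)%:E)%E.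
  by rewrite -IsX; apply: eq_integral => w _; rewrite -EFinD; congr (_%:E); ring.
rewrite H => H2.
have : (\int[P]_w (a + s * X w)%:E = (s * mr)%:E - (- a)%:E)%E.
  by rewrite -H2 addeK.
by move=> ->; rewrite -EFinB; congr (_%:E); ring.
Qed.


Lemma L_ge0 A : 0 <= L A.
Proof. exact: fine_ge0 (measure_ge0 _ _). Qed.

Lemma ext_key (x y : \bar R) (r : R) : (0 <= x)%E -> (0 <= y)%E ->
  (x + 2%:E * y = r%:E)%E -> x = (fine x)%:E /\ fine x = r - 2 * fine y.
Proof.
case: x => [x| |] //; case: y => [y| |] //= _ _.
- by move=> [<-]; split => //; ring.
- by rewrite mulry gtr0_sg // mul1e.
by rewrite mulry gtr0_sg // mul1e.
Qed.

Lemma intC C : measurable C ->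
  exists a, (\int[P]_w ((L (C `&` RS w)) ^+ 2 + (L (C `&` ~` RS w)) ^+ 2)%:E = a%:E)%E
    /\ a <= L C ^+ 2 - L C ^+ 3 / alpha.
Proof.
move=> mC.
have mf := mfL C mC; have mg := mfLc C mC.
have Sh := shatter C mC.
set I1 := (\int[P]_w ((L (C `&` RS w)) ^+ 2 + (L (C `&` ~` RS w)) ^+ 2)%:E)%E.
set I2 := (\int[P]_w (L (C `&` RS w) * L (C `&` ~` RS w))%:E)%E.
have I10 : (0 <= I1)%E.
  by apply: integral_ge0 => w _; rewrite lee_fin addr_ge0 // sqr_ge0.
have I20 : (0 <= I2)%E.
  by apply: integral_ge0 => w _; rewrite lee_fin mulr_ge0 // L_ge0.
have mfg : measurable_fun setT (fun w => (L (C `&` RS w) * L (C `&` ~` RS w))%:E).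
  by apply/measurable_EFinP; exact: measurable_funM.
have mfg2 : measurable_fun setT (fun w => ((L (C `&` RS w)) ^+ 2 + (L (C `&` ~` RS w)) ^+ 2)%:E).
  by apply/measurable_EFinP; apply: measurable_funD; exact: measurable_funX.
have E1 : (I1 + 2%:E * I2 = (L C ^+ 2)%:E)%E.
  rewrite /I2 -ge0_integralZl_EFin //; last first.
    by move=> w _; rewrite lee_fin mulr_ge0 // L_ge0.
  rewrite /I1 -ge0_integralD //; first last.
  - by apply: emeasurable_funM => //; exact: measurable_cst.
  - by move=> w _; rewrite mule_ge0 // lee_fin mulr_ge0 // L_ge0.
  - by move=> w _; rewrite lee_fin addr_ge0 // sqr_ge0.
  rewrite -[RHS](intP_cst (L C ^+ 2)%:E); apply: eq_integral => w _.
  rewrite -EFinM -EFinD -(LU C (RS w) mC (RSm w)); congr (_%:E); ring.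
have [I1E I1F] := ext_key I1 I2 (L C ^+ 2) I10 I20 E1.
exists (fine I1); split => //.
rewrite I1F lerD2l lerN2 ler_pdivrMr //.
apply: (le_trans Sh); rewrite -/I2 le_eqVlt; apply/orP; left; apply/eqP; ring.
Qed.


Let LS (acc : seq (set T)) := \sum_(C <- cellsL acc) L C ^+ 2.

Lemma LS_ge0 acc : 0 <= LS acc.
Proof. by apply: sumr_ge0 => C _; exact: sqr_ge0. Qed.

Lemma Hcons w (acc : seq (set T)) : (forall A : set T, A \in acc -> measurable A) ->
  (forall A : set T, A \in RS w :: acc -> measurable A).
Proof.
by move=> H A; rewrite inE => /orP[/eqP ->|/H //]; exact: RSm.
Qed.

Lemma step acc : (forall A : set T, A \in acc -> measurable A) -> 0 < L setT ->
  exists m, (\int[P]_w (LS (RS w :: acc))%:E = m%:E)%E /\ 0 <= m /\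
    m <= LS acc - LS acc ^+ 2 / (alpha * L setT) /\
    measurable_fun setT (fun w => LS (RS w :: acc)).
Proof.
move=> Hm Lpos.
set l := cellsL acc.
have ml : forall i, measurable (nth set0 l i).
  move=> i; case: (ltnP i (size l)) => Hi.
    by apply: (cellsL_meas acc Hm); exact: mem_nth.
  by rewrite nth_default.
set F := fun i w => (L (nth set0 l i `&` RS w)) ^+ 2 + (L (nth set0 l i `&` ~` RS w)) ^+ 2.
have Xe : forall w, LS (RS w :: acc) = \sum_(0 <= i < size l) F i w.
  move=> w; rewrite /LS /= big_cat /= !big_map /= -big_split /=.
  by rewrite (big_nth set0).
have mF : forall i, measurable_fun setT (F i).
  by move=> i; apply: measurable_funD; apply: measurable_funX;
    [exact: mfL|exact: mfLc].
have F0 : forall i w, 0 <= F i w by move=> i w; rewrite addr_ge0 // sqr_ge0.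
pose a i := fine (\int[P]_w (F i w)%:E)%E.
have aE : forall i, (\int[P]_w (F i w)%:E = (a i)%:E)%E /\
    a i <= L (nth set0 l i) ^+ 2 - L (nth set0 l i) ^+ 3 / alpha.
  move=> i; have [b [Hb1 Hb2]] := intC _ (ml i).
  by rewrite /a /F Hb1 /=.
have mX : measurable_fun setT (fun w => LS (RS w :: acc)).
  rewrite (_ : (fun w => _) = fun w => \sum_(0 <= i < size l) F i w);
    last by apply/funext => w; rewrite Xe.
  by apply: measurable_sum.
exists (\sum_(0 <= i < size l) a i); split; last split; last split => //.
- under eq_integral do rewrite Xe -sumEFin.
  rewrite ge0_integral_sum //; last first.
    by move=> i w _; rewrite lee_fin.
    by move=> i; exact/measurable_EFinP.
  rewrite -sumEFin; apply: eq_bigr => i _; exact: (aE i).1.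
- apply: sumr_ge0 => i _; apply: fine_ge0; apply: integral_ge0 => w _.
  by rewrite lee_fin.
- set G := LS acc; set Lam := L setT.
  have GE : G = \sum_(0 <= i < size l) L (nth set0 l i) ^+ 2.
    by rewrite /G /LS (big_nth set0).
  have LamE : Lam = \sum_(0 <= i < size l) L (nth set0 l i).
    by rewrite /Lam -(sumL acc Hm) (big_nth set0).
  apply: (le_trans (ler_sum _ (fun i _ => (aE i).2))).
  rewrite sumrB -mulr_suml -GE.
  set t := G / Lam.
  have H1 : \sum_(0 <= i < size l) (2 * t * L (nth set0 l i) ^+ 2 - t ^+ 2 * L (nth set0 l i))
      <= \sum_(0 <= i < size l) L (nth set0 l i) ^+ 3.
    apply: ler_sum => i _; rewrite -subr_ge0.
    have -> : L (nth set0 l i) ^+ 3 - (2 * t * L (nth set0 l i) ^+ 2 - t ^+ 2 * L (nth set0 l i))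
        = L (nth set0 l i) * (L (nth set0 l i) - t) ^+ 2 by ring.
    by rewrite mulr_ge0 ?sqr_ge0 // L_ge0.
  have H2 : \sum_(0 <= i < size l) (2 * t * L (nth set0 l i) ^+ 2 - t ^+ 2 * L (nth set0 l i))
      = G ^+ 2 / Lam.
    rewrite sumrB -!mulr_sumr -GE -LamE /t; field; exact: lt0r_neq0.
  rewrite H2 in H1.
  rewrite lerD2l lerN2.
  have -> : G ^+ 2 / (alpha * Lam) = (G ^+ 2 / Lam) / alpha.
    by field; rewrite !gt_eqF.
  by rewrite ler_pM2r ?invr_gt0.
Qed.


Lemma main k acc : (forall A : set T, A \in acc -> measurable A) -> 0 < L setT ->
  (Eiter P RS lam k acc <= (psi (alpha * L setT) k%:R (LS acc))%:E)%E.
Proof.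
move=> Hm Lpos; have c0 : 0 < alpha * L setT by rewrite mulr_gt0.
elim: k acc Hm => [|k IH] acc Hm /=.
  rewrite lee_fin /psi mul0r addr0 mulrAC divff ?mul1r ?gt_eqF //.
  exact: norm2_le.
have [m [Im [m0 [mle mX]]]] := step acc Hm Lpos.
set c := alpha * L setT.
set s := c ^+ 2 / (c + k%:R * m) ^+ 2.
set a := psi c k%:R m - s * m.
have k0 : 0 <= (k%:R : R) by [].
have s0 : 0 <= s.
  rewrite /s divr_ge0 ?sqr_ge0 //.
have Ha : forall w, psi c k%:R (LS (RS w :: acc)) <= a + s * LS (RS w :: acc).
  by move=> w; apply: psi_tangent => //; exact: LS_ge0.
have Ha0 : forall w, 0 <= a + s * LS (RS w :: acc).
  by move=> w; apply: le_trans (Ha w); apply: psi_ge0 => //; exact: LS_ge0.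
apply: (@le_trans _ _ (\int[P]_w (a + s * LS (RS w :: acc))%:E)%E).
  apply: le_int_nm; first by move=> w; exact: Eiter_ge0.
  move=> w; apply: le_trans (IH _ (Hcons w acc Hm)) _.
  by rewrite lee_fin.
rewrite (int_affine (fun w => LS (RS w :: acc)) a s m) //; last first.
  by move=> w; exact: LS_ge0.
rewrite lee_fin /a subrK -natr1.
have h0 : 0 <= LS acc - LS acc ^+ 2 / c by apply: le_trans m0 mle.
apply: le_trans (psi_step _ _ _ c0 k0 (LS_ge0 acc) h0).
exact: (psi_mono _ _ _ _ c0 k0 m0 mle).
Qed.

Lemma zero_case k acc : (forall A : set T, A \in acc -> measurable A) -> L setT = 0 ->
  (Eiter P RS lam k acc <= 0)%E.
Proof.
move=> Hm L0; elim: k acc Hm => [|k IH] acc Hm /=.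
  rewrite lee_fin; apply: (le_trans (norm2_le _ _ _ lam acc)).
  rewrite big_seq big1 // => C HC.
  have mC := cellsL_meas acc Hm C HC.
  have : L C <= L setT.
    rewrite -lee_fin !LE //; apply: le_measure; rewrite ?inE //.
  rewrite L0 => HL; have : L C = 0 by apply/eqP; rewrite eq_le HL L_ge0.
  by move=> HC0; change (L C ^+ 2 = 0); rewrite HC0 expr0n.
apply: (@le_trans _ _ (\int[P]_w (cst 0%E w))%E).
  apply: le_int_nm; first by move=> w; exact: Eiter_ge0.
  by move=> w; exact: (IH _ (Hcons w acc Hm)).
by rewrite integral0.
Qed.

End meas.

Theorem lemma7p1 (R : realType) (M : completePseudoMetricType R)
  (HM : hausdorff_space M) (Hsep : separable_space M)
  (lam : {finite_measure set (borel_of M) -> \bar R})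
  (dO : measure_display) (O : measurableType dO) (P : probability O R)
  (RS : O -> set (borel_of M))
  (RS_meas : measurable [set p : O * borel_of M | RS p.1 p.2])
  (RS_sym : forall (n : nat) (x : 'I_n -> borel_of M) (b : 'I_n -> bool),
      P [set w | forall i, (x i \in RS w) = b i] =
      P [set w | forall i, (x i \in ~` RS w) = b i])
  (alpha : R) (alpha_gt0 : 0 < alpha)
  (shatter : forall A : set (borel_of M), measurable A ->
      (fine (lam A)) ^+ 3 <=
      2 * alpha * fine (\int[P]_w ((fine (lam (A `&` RS w)) *
                                    fine (lam (A `&` ~` RS w)))%:E)%E))
  (k : nat) (k_ge1 : (1 <= k)%N) :
  (Eiter P RS lam k [::] <=
   (Num.max (fine (lam setT) ^+ 2) (2 * alpha * fine (lam setT))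
      / k.+1%:R)%:E)%E.

Proof.
have L0 : 0 <= fine (lam setT) by exact: fine_ge0 (measure_ge0 _ _).
have Hm0 : forall A : set (borel_of M), A \in [::] -> measurable A by [].
have Hden : 0 < k.+1%:R :> R by [].
have [Lpos|Lle] := ltP 0 (fine (lam setT)).
  have H := main _ _ _ lam _ _ P RS RS_meas alpha alpha_gt0 shatter k [::] Hm0 Lpos.
  apply: (le_trans H); rewrite lee_fin /= big_seq1 -[k.+1%:R]natr1.
  have := psi_final (alpha * fine (lam setT)) k%:R (fine (lam setT)) (mulr_gt0 alpha_gt0 Lpos) L0 (ler0n _ k).
  move=> H2; apply: (le_trans H2); by rewrite mulrA.
have Lz : fine (lam setT) = 0 by apply/eqP; rewrite eq_le Lle L0.
have H0 := zero_case _ _ _ lam _ _ P RS RS_meas k [::] Hm0 Lz.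
apply: le_trans H0 _.
rewrite lee_fin divr_ge0 // le_max; apply/orP; left; exact: sqr_ge0.
Qed.
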